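(* Let $G$ be a finite simple graph that is prime and belongs to DH $\cap$ co-DH. Then $G$ is isomorphic to $P_4$ or to the Bull.
   Context: All graphs are finite and simple. A graph is distance-hereditary if it has no induced subgraph isomorphic to a hole (an induced cycle of length at least $5$), the house (a $5$-cycle plus one chord; equivalently the complement of $P_5$), the domino (a $6$-cycle $v_1v_2\dots v_6$ plus the chord $v_1v_4$), or the gem (a path $P_4$ plus one vertex adjacent to all four of its vertices). DH $\cap$ co-DH denotes the class of graphs $G$ such that both $G$ and its complement $\overline{G}$ are distance-hereditary. A module of $G=(V,E)$ is a set $M\subseteq V$ such that every $v\in V\setminus M$ is adjacent either to all vertices of $M$ or to none of them; a module is trivial if $|M|=1$ or $M=V$. A graph is prime if all its modules are trivial. $P_4$ is the path on $4$ vertices. The Bull is the graph on vertices $a,b,c,d,e$ with edges $ab,bc,ca,ad,be$. *)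

(* Defs.v *)
From mathcomp Require Import all_boot.
Set Implicit Arguments. Unset Strict Implicit. Unset Printing Implicit Defensive.

Definition simple_graph (T : finType) (e : rel T) : Prop :=
  symmetric e /\ irreflexive e.

Definition compl_rel (T : finType) (e : rel T) : rel T :=
  fun x y => (x != y) && ~~ e x y.

Definition edges_rel (n : nat) (l : seq (nat * nat)) : rel 'I_n :=
  fun i j => ((val i, val j) \in l) || ((val j, val i) \in l).

Definition cycle_rel (n : nat) : rel 'I_n :=
  fun i j => (val j == (val i).+1 %% n) || (val i == (val j).+1 %% n).

Definition house_rel : rel 'I_5 :=
  @edges_rel 5 [:: (0,1); (1,2); (2,3); (3,4); (4,0); (0,2)].
Definition domino_rel : rel 'I_6 :=
  @edges_rel 6 [:: (0,1); (1,2); (2,3); (3,4); (4,5); (5,0); (0,3)].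
Definition gem_rel : rel 'I_5 :=
  @edges_rel 5 [:: (0,1); (1,2); (2,3); (4,0); (4,1); (4,2); (4,3)].
Definition P4_rel : rel 'I_4 :=
  @edges_rel 4 [:: (0,1); (1,2); (2,3)].
Definition bull_rel : rel 'I_5 :=
  @edges_rel 5 [:: (0,1); (1,2); (2,0); (0,3); (1,4)].

Definition has_induced (n : nat) (h : rel 'I_n) (T : finType) (e : rel T) : Prop :=
  exists f : 'I_n -> T, injective f /\ forall i j, e (f i) (f j) = h i j.

Definition isomorphic_to (n : nat) (h : rel 'I_n) (T : finType) (e : rel T) : Prop :=
  exists f : 'I_n -> T, bijective f /\ forall i j, e (f i) (f j) = h i j.

Definition distance_hereditary (T : finType) (e : rel T) : Prop :=
  (forall n, 5 <= n -> ~ has_induced (@cycle_rel n) e) /\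
  ~ has_induced house_rel e /\ ~ has_induced domino_rel e /\
  ~ has_induced gem_rel e.

Definition DH_coDH (T : finType) (e : rel T) : Prop :=
  distance_hereditary e /\ distance_hereditary (compl_rel e).

Definition is_module (T : finType) (e : rel T) (M : {set T}) : Prop :=
  forall v, v \notin M ->
    (forall x, x \in M -> e v x) \/ (forall x, x \in M -> ~~ e v x).

Definition prime_graph (T : finType) (e : rel T) : Prop :=
  forall M : {set T}, is_module e M -> #|M| <= 1 \/ M = setT.

(* Main.v *)
Require Import Defs.
From mathcomp Require Import all_boot zify.
From Stdlib Require Import Classical.
Set Implicit Arguments. Unset Strict Implicit. Unset Printing Implicit Defensive.

Fixpoint allb {T : Type} (p : T -> bool) (s : seq T) : bool :=
  if s is x :: s' then (if p x then allb p s' else false) else true.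
Fixpoint hasb {T : Type} (p : T -> bool) (s : seq T) : bool :=
  if s is x :: s' then (if p x then true else hasb p s') else false.
Definition beq (a b : bool) := if a then b else ~~ b.
Fixpoint nmem (x : nat) (s : seq nat) := if s is y :: s' then eqn x y || nmem x s' else false.
Fixpoint pmem (a b : nat) (l : seq (nat * nat)) :=
  if l is (c, d) :: l' then (eqn a c && eqn b d) || pmem a b l' else false.
Definition edn (l : seq (nat * nat)) (a b : nat) : bool := pmem a b l || pmem b a l.
Definition cycn (n a b : nat) : bool := eqn b (a.+1 %% n) || eqn a (b.+1 %% n).
Definition houseL := [:: (0,1); (1,2); (2,3); (3,4); (4,0); (0,2)].
Definition dominoL := [:: (0,1); (1,2); (2,3); (3,4); (4,5); (5,0); (0,3)].
Definition gemL := [:: (0,1); (1,2); (2,3); (4,0); (4,1); (4,2); (4,3)].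
Definition P4L := [:: (0,1); (1,2); (2,3)].
Definition bullL := [:: (0,1); (1,2); (2,0); (0,3); (1,4)].

Fixpoint injs (k m : nat) : seq (seq nat) :=
  if m is m'.+1 then
    flatten [seq [seq i :: s | i <- iota 0 k & ~~ nmem i s] | s <- injs k m']
  else [:: [::]].

Definition tab (An : nat -> nat -> bool) kk := [seq [seq An i j | j <- iota 0 kk] | i <- iota 0 kk].
Definition tb (t : seq (seq bool)) a b := nth false (nth [::] t a) b.

Definition containsT (Xt : seq (seq bool)) m (At : seq (seq bool)) (J : seq (seq nat)) :=
  hasb (fun p => allb (fun i => allb (fun j => beq (tb At (nth 0 p i) (nth 0 p j)) (tb Xt i j)) (iota 0 m)) (iota 0 m)) J.

Definition cmpl (An : nat -> nat -> bool) (a b : nat) := ~~ eqn a b && ~~ An a b.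

Definition tC5 := tab (cycn 5) 5.
Definition tC6 := tab (cycn 6) 6.
Definition tC7 := tab (cycn 7) 7.
Definition tHo := tab (edn houseL) 5.
Definition tDo := tab (edn dominoL) 6.
Definition tGe := tab (edn gemL) 5.
Definition tBu := tab (edn bullL) 5.

Definition bad1 J5 J6 J7 At :=
  if containsT tC5 5 At J5 then true else
  if containsT tC6 6 At J6 then true else
  if containsT tC7 7 At J7 then true else
  if containsT tHo 5 At J5 then true else
  if containsT tDo 6 At J6 then true else containsT tGe 5 At J5.

Definition badb J5 J6 J7 nb (An : nat -> nat -> bool) kk :=
  if bad1 J5 J6 J7 (tab An kk) then true else
  if bad1 J5 J6 J7 (tab (cmpl An) kk) then true else
  if nb then containsT tBu 5 (tab An kk) J5 else false.

Definition mat (Hn : nat -> nat -> bool) K (xb wb : seq bool) (c : bool) (a b : nat) : bool :=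
 if a < K then (if b < K then Hn a b else if eqn b K then nth false xb a else nth false wb a)
 else if eqn a K then (if b < K then nth false xb b else if eqn b K then false else c)
 else (if b < K then nth false wb b else if eqn b K then c else false).

Fixpoint bits n : seq (seq bool) :=
  if n is n'.+1 then flatten [seq [seq b :: s | s <- bits n'] | b <- [:: false; true]] else [:: [::]].

Definition clone Hn K (xb : seq bool) h :=
  allb (fun i => eqn i h || beq (nth false xb i) (Hn h i)) (iota 0 K).

Definition factA' J5 J6 J7 Hn K nb :=
  allb (fun xb => if allb id xb then true else if ~~ hasb id xb then true else
   if hasb (clone Hn K xb) (iota 0 K) then true else badb J5 J6 J7 nb (mat Hn K xb xb false) K.+1) (bits K).
Definition factA Hn K nb := factA' (injs K.+1 5) (injs K.+1 6) (injs K.+1 7) Hn K nb.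

Definition factB' J5 J6 J7 Hn K nb :=
  allb (fun h => allb (fun xb => if clone Hn K xb h then
   allb (fun wb => if clone Hn K wb h then true else
      badb J5 J6 J7 nb (mat Hn K xb wb (~~ nth false wb h)) K.+2) (bits K) else true) (bits K)) (iota 0 K).
Definition factB Hn K nb := factB' (injs K.+2 5) (injs K.+2 6) (injs K.+2 7) Hn K nb.

Lemma fA4 : factA (edn P4L) 4 true. Proof. vm_compute. reflexivity. Qed.
Lemma fA5 : factA (edn bullL) 5 false. Proof. vm_compute. reflexivity. Qed.
Lemma fB4 : factB (edn P4L) 4 true. Proof. vm_compute. reflexivity. Qed.
Lemma fB5 : factB (edn bullL) 5 false. Proof. vm_compute. reflexivity. Qed.

Lemma allbE T (p : T -> bool) s : allb p s = all p s.
Proof. by elim: s => //= x s ->; case: (p x). Qed.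
Lemma hasbE T (p : T -> bool) s : hasb p s = has p s.
Proof. by elim: s => //= x s ->; case: (p x). Qed.
Lemma beqE a b : beq a b = (a == b).
Proof. by case: a; case: b. Qed.
Lemma nmemE x s : nmem x s = (x \in s).
Proof. by elim: s => //= y s ->; rewrite inE eqnE. Qed.
Lemma pmemE a b l : pmem a b l = ((a, b) \in l).
Proof. by elim: l => //= -[c d] l ->; rewrite inE eqnE /= xpair_eqE. Qed.
Lemma ednE n l (i j : 'I_n) : edges_rel l i j = edn l i j.
Proof. by rewrite /edges_rel /edn !pmemE. Qed.
Lemma cycnE n (i j : 'I_n) : cycle_rel i j = cycn n i j.
Proof. by rewrite /cycle_rel /cycn !eqnE. Qed.

Lemma injsP k m p : p \in injs k m -> [/\ size p = m, uniq p & all (fun x => x < k) p].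
Proof.
elim: m p => [|m IH] p; first by rewrite inE => /eqP ->.
move=> pin; have {pin} : p \in flatten [seq [seq i :: s | i <- iota 0 k & ~~ nmem i s] | s <- injs k m] := pin.
case/(@flattenP (seq nat)) => q /mapP [s sin ->] /mapP [i]; rewrite mem_filter nmemE mem_iota /= => /andP [ni ik] ->.
by have [sz us als] := IH _ sin; rewrite /= sz ni us ik als.
Qed.

Lemma bitsP s : s \in bits (size s).
Proof.
elim: s => [|b s IH]; first by rewrite inE.
have H : b :: s \in flatten [seq [seq b0 :: s0 | s0 <- bits (size s)] | b0 <- [:: false; true]].
  apply/(@flattenP (seq bool)); exists [seq b :: s0 | s0 <- bits (size s)]; last by apply/map_f.
  by case: b; rewrite !inE eqxx ?orbT.
exact: H.
Qed.

Lemma tbP An kk a b : a < kk -> b < kk -> tb (tab An kk) a b = An a b.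
Proof.
move=> ha hb; rewrite /tb /tab (nth_map 0) ?size_iota // (nth_map 0) ?size_iota //.
by rewrite !nth_iota.
Qed.

Section Sound.
Variable T : finType.

Lemma containsT_sound (Xn An : nat -> nat -> bool) m kk (r : rel T) (g : nat -> T) (X : rel 'I_m) :
  (forall i j : 'I_m, X i j = Xn i j) ->
  (forall a b, a < kk -> b < kk -> r (g a) (g b) = An a b) ->
  (forall a b, a < kk -> b < kk -> g a = g b -> a = b) ->
  containsT (tab Xn m) m (tab An kk) (injs kk m) -> has_induced X r.
Proof.
move=> HX Hr Hg; rewrite /containsT hasbE => /hasP [p pin]; rewrite allbE => /allP Hp.
have [sz up /allP lt] := injsP pin.
have ltp (i : 'I_m) : nth 0 p i < kk by apply: lt; apply: mem_nth; rewrite sz.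
exists (fun i : 'I_m => g (nth 0 p i)); split.
  move=> i j /Hg => /(_ (ltp i) (ltp j)) /eqP; rewrite nth_uniq ?sz // => /eqP.
  exact: val_inj.
move=> i j; have := Hp i; rewrite mem_iota /= ltn_ord => /(_ isT); rewrite allbE => /allP.
move=> /(_ j); rewrite mem_iota /= ltn_ord => /(_ isT); rewrite beqE => /eqP.
by rewrite !tbP ?ltp // HX Hr ?ltp.
Qed.
End Sound.

Section Main.
Variable T : finType.
Variable e : rel T.
Hypothesis sym : symmetric e.
Hypothesis irr : irreflexive e.

Lemma bad1_sound (r : rel T) An kk (g : nat -> T) :
  (forall a b, a < kk -> b < kk -> r (g a) (g b) = An a b) ->
  (forall a b, a < kk -> b < kk -> g a = g b -> a = b) ->
  distance_hereditary r ->
  bad1 (injs kk 5) (injs kk 6) (injs kk 7) (tab An kk) -> False.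
Proof.
move=> Hr Hg [C [Ho [Do Ge]]]; rewrite /bad1 /tC5 /tC6 /tC7 /tHo /tDo /tGe.
case: ifP => [/(containsT_sound (@cycnE 5) Hr Hg) H _|_]; first exact: (C 5 isT H).
case: ifP => [/(containsT_sound (@cycnE 6) Hr Hg) H _|_]; first exact: (C 6 isT H).
case: ifP => [/(containsT_sound (@cycnE 7) Hr Hg) H _|_]; first exact: (C 7 isT H).
case: ifP => [/(containsT_sound (X := house_rel) (@ednE 5 houseL) Hr Hg) H _|_]; first exact: Ho H.
case: ifP => [/(containsT_sound (X := domino_rel) (@ednE 6 dominoL) Hr Hg) H _|_]; first exact: Do H.
by move/(containsT_sound (X := gem_rel) (@ednE 5 gemL) Hr Hg).
Qed.

Lemma badb_sound (nb : bool) An kk (g : nat -> T) :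
  (forall a b, a < kk -> b < kk -> e (g a) (g b) = An a b) ->
  (forall a b, a < kk -> b < kk -> g a = g b -> a = b) ->
  DH_coDH e -> (nb -> ~ has_induced bull_rel e) ->
  badb (injs kk 5) (injs kk 6) (injs kk 7) nb An kk -> False.
Proof.
move=> He Hg [D1 D2] NB.
have Hc : forall a b, a < kk -> b < kk -> compl_rel e (g a) (g b) = cmpl An a b.
  move=> a b ha hb; rewrite /compl_rel /cmpl eqnE -He //.
  case: (eqVneq a b) => [->|nab]; first by rewrite !eqxx.
  have -> : g a != g b by apply/eqP => /Hg => /(_ ha hb) /eqP; rewrite (negbTE nab).
  by [].
rewrite /badb.
case: ifP => [/(bad1_sound He Hg D1)|_] //.
case: ifP => [/(bad1_sound Hc Hg D2)|_] //.
case: nb NB => // NB; rewrite /tBu => /(containsT_sound (X := bull_rel) (@ednE 5 bullL) He Hg).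
exact: NB.
Qed.

Variables (k : nat) (hv : 'I_k.+1 -> T) (Hn : nat -> nat -> bool).
Hypothesis hvH : forall i j : 'I_k.+1, e (hv i) (hv j) = Hn i j.
Hypothesis hvinj : injective hv.

Definition gg (x w : T) (a : nat) := if a < k.+1 then hv (inord a) else if eqn a k.+1 then x else w.
Definition xbits x := [seq e x (hv (inord i)) | i <- iota 0 k.+1].

Lemma size_xbits x : size (xbits x) = k.+1.
Proof. by rewrite size_map size_iota. Qed.

Lemma nth_xbits x a : a < k.+1 -> nth false (xbits x) a = e x (hv (inord a)).
Proof. by move=> ha; rewrite (nth_map 0) ?size_iota // nth_iota. Qed.

Lemma mat_ok x w a b : e (gg x w a) (gg x w b) = mat Hn k.+1 (xbits x) (xbits w) (e x w) a b.
Proof.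
rewrite /gg /mat; case: (ltnP a k.+1) => ha; case: (ltnP b k.+1) => hb.
- by rewrite hvH !inordK.
- case: ifP => _; first by rewrite nth_xbits // sym.
  by rewrite nth_xbits // sym.
- case: ifP => _; first by rewrite nth_xbits.
  by rewrite nth_xbits.
- by case: ifP => ea; case: ifP => eb //; rewrite ?irr // sym.
Qed.

Lemma gg_inj x w a b : x \notin codom hv -> w \notin codom hv -> x != w ->
  a < k.+3 -> b < k.+3 -> gg x w a = gg x w b -> a = b.
Proof.
move=> xn wn xw ha hb; rewrite /gg.
have nin y i : y \notin codom hv -> hv i <> y by move=> yn E; move: yn; rewrite -E codom_f.
case: (ltnP a k.+1) => ha'; case: (ltnP b k.+1) => hb'.
- by move/hvinj/(congr1 (@nat_of_ord _)); rewrite !inordK.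
- by case: ifP => _ /nin; [move/(_ xn)|move/(_ wn)].
- by case: ifP => _ /esym /nin; [move/(_ xn)|move/(_ wn)].
- rewrite !eqnE; case: (eqVneq a k.+1) => [->|na]; case: (eqVneq b k.+1) => [->|nb] //.
  + by move=> E; move: xw; rewrite E eqxx.
  + by move=> E; move: xw; rewrite E eqxx.
  + move=> _; apply/eqP; rewrite eqn_leq.
    by move: ha hb ha' hb' na nb; clear; do 2 case: ltngtP => //=; lia.
Qed.

Lemma gg_inj1 x a b : x \notin codom hv ->
  a < k.+2 -> b < k.+2 -> gg x x a = gg x x b -> a = b.
Proof.
move=> xn ha hb; rewrite /gg.
have nin y i : y \notin codom hv -> hv i <> y by move=> yn E; move: yn; rewrite -E codom_f.
case: (ltnP a k.+1) => ha'; case: (ltnP b k.+1) => hb'.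
- by move/hvinj/(congr1 (@nat_of_ord _)); rewrite !inordK.
- by case: ifP => _ /nin; move/(_ xn).
- by case: ifP => _ /esym /nin; move/(_ xn).
- move=> _; apply/eqP; rewrite eqn_leq.
  by move: ha hb ha' hb'; clear; lia.
Qed.

Definition cl x (h : 'I_k.+1) := [forall i : 'I_k.+1, (i == h) || (e x (hv i) == Hn h i)].

Lemma clone_xbits x (h : 'I_k.+1) : clone Hn k.+1 (xbits x) h = cl x h.
Proof.
rewrite /clone /cl allbE; apply/allP/forallP => [H i | H i].
  have := H i; rewrite mem_iota ltn_ord => /(_ isT).
  by rewrite eqnE beqE nth_xbits // inord_val.
rewrite mem_iota => /andP [_ ilt]; have := H (Ordinal ilt).
have E : inord i = Ordinal ilt by apply: val_inj; rewrite /= inordK.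
by rewrite eqnE beqE nth_xbits // E.
Qed.

Lemma typeA (nb : bool) x : factA Hn k.+1 nb -> DH_coDH e -> (nb -> ~ has_induced bull_rel e) ->
  x \notin codom hv ->
  [\/ forall i, e x (hv i), forall i, ~~ e x (hv i) | exists h, cl x h].
Proof.
move=> FA D NB xn.
have memx (i : 'I_k.+1) : e x (hv i) \in xbits x.
  have <- : nth false (xbits x) i = e x (hv i) by rewrite nth_xbits // inord_val.
  by apply: mem_nth; rewrite size_xbits.
have bxx := bitsP (xbits x); rewrite size_xbits in bxx.
move: FA; rewrite /factA /factA' allbE => /allP /(_ (xbits x) bxx).
case: ifP => [H _ | _].
  by apply: Or31 => i; move: H; rewrite allbE => /allP; apply.
case: ifP => [H _ | _].
  apply: Or32 => i; apply/negP => Exi; move: H; rewrite hasbE => /negP; apply.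
  by apply/hasP; exists (e x (hv i)).
case: ifP => [H _ | _].
  move: H; rewrite hasbE => /hasP [h]; rewrite mem_iota => /andP [_ hlt] Hc.
  by apply: Or33; exists (Ordinal hlt); rewrite -clone_xbits.
move=> Hb; exfalso; apply: (badb_sound (g := gg x x) _ _ D NB Hb).
  by move=> a b _ _; rewrite mat_ok irr.
by move=> a b ha hb; apply: gg_inj1.
Qed.

Lemma typeB (nb : bool) x w (h : 'I_k.+1) : factB Hn k.+1 nb -> DH_coDH e ->
  (nb -> ~ has_induced bull_rel e) ->
  x \notin codom hv -> w \notin codom hv -> x != w -> cl x h -> ~~ cl w h ->
  e w x = e w (hv h).
Proof.
move=> FB D NB xn wn xw cx cw; apply/eqP/negP => nE.
have bxx := bitsP (xbits x); rewrite size_xbits in bxx.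
have bxw := bitsP (xbits w); rewrite size_xbits in bxw.
move: FB; rewrite /factB /factB' allbE => /allP /(_ h); rewrite mem_iota ltn_ord => /(_ isT).
rewrite allbE => /allP /(_ (xbits x) bxx).
rewrite clone_xbits cx allbE => /allP /(_ (xbits w) bxw).
rewrite clone_xbits (negbTE cw) => Hb.
apply: (badb_sound (g := gg x w) _ _ D NB Hb).
  move=> a b _ _; rewrite mat_ok; congr mat.
  rewrite nth_xbits // inord_val; move: nE; rewrite [e w x]sym.
  by case: (e x w); case: (e w (hv h)).
by move=> a b ha hb; apply: gg_inj.
Qed.

Lemma main_case (H : rel 'I_k.+1) (nb : bool) : (forall i j, H i j = Hn i j) ->
  factA Hn k.+1 nb -> factB Hn k.+1 nb -> 1 <= k -> (nb -> ~ has_induced bull_rel e) ->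
  prime_graph e -> DH_coDH e -> isomorphic_to H e.
Proof.
move=> HnE FA FB k1 NB P D.
case: (leqP #|T| k.+1) => hT.
  exists hv; split; last by move=> i j; rewrite hvH HnE.
  by apply: inj_card_bij => //; rewrite card_ord.
have [x0 x0n] : exists x, x \notin codom hv.
  apply/existsP; rewrite -negb_forall; apply/negP => /forallP Hall.
  have : #|[set: T]| <= #|codom hv|.
    by apply: subset_leq_card; apply/subsetP => y _; exact: Hall y.
  by rewrite cardsT card_codom // card_ord; lia.
have [i1 [i2 i12]] : exists i1 i2 : 'I_k.+1, i1 != i2.
  by exists ord0, ord_max; apply/eqP => /(congr1 (@nat_of_ord _)) /=; lia.
case: (boolP [exists x, (x \notin codom hv) && [exists h, cl x h]]).
- case/existsP => x /andP [xn /existsP [h clh]].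
  pose M := hv h |: [set y | (y \notin codom hv) && cl y h].
  have Mmod : is_module e M.
    move=> v vM.
    have key : forall z, z \in M -> e v z = e v (hv h).
      move=> z; rewrite /M !inE => /orP [/eqP -> // | /andP [zn clz]].
      case: (boolP (v \in codom hv)) => [/codomP [i Ei] | vn]; first subst v.
        have ih : i != h by apply: contraNneq vM => ->; rewrite /M !inE eqxx.
        move/forallP: clz => /(_ i); rewrite (negbTE ih) /= => /eqP.
        by rewrite sym => ->; rewrite -hvH sym.
      apply: (typeB FB D NB zn vn _ clz).
        by apply: contraNneq vM => <-; rewrite /M !inE zn clz orbT.
      by apply: contra vM => clv; rewrite /M !inE vn clv orbT.
    by case: (boolP (e v (hv h))) => Ev; [left|right] => z zM; rewrite key // ?Ev.
  case: (P M Mmod) => [cM | MT].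
    have hx : hv h != x by apply: contraNneq xn => <-; exact: codom_f.
    have : #|[set hv h; x]| <= #|M|.
      apply: subset_leq_card; apply/subsetP => y; rewrite /M !inE => /orP [] /eqP ->;
      by rewrite ?eqxx ?xn ?clh ?orbT.
    by rewrite cards2 hx; lia.
  have [i ih] : exists i, i != h.
    by case: (eqVneq i1 h) => [E|]; [exists i2; rewrite -E eq_sym | exists i1].
  have : hv i \in M by rewrite MT inE.
  rewrite /M !inE codom_f /= orbF => /eqP /hvinj E; by move: ih; rewrite E eqxx.
- move=> nocl; pose M := [set y | y \in codom hv].
  have Mmod : is_module e M.
    move=> v; rewrite inE => vn.
    case: (typeA FA D NB vn) => [Hall | Hnone | [h clh]].
    + by left => z; rewrite inE => /codomP [i ->].
    + by right => z; rewrite inE => /codomP [i ->].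
    + by move: nocl; rewrite negb_exists => /forallP /(_ v); rewrite vn /= negb_exists => /forallP /(_ h); rewrite clh.
  case: (P M Mmod) => [cM | MT].
    by move: cM; rewrite cardsE card_codom // card_ord; lia.
  have : x0 \in M by rewrite MT inE.
  by rewrite /M inE (negbTE x0n).
Qed.

End Main.

Definition anti (T : finType) (r : rel T) (A B : {set T}) := forall a b, a \in A -> b \in B -> ~~ r a b.
Definition comp2 (T : finType) (r : rel T) (A B : {set T}) := forall a b, a \in A -> b \in B -> r a b.
Definition goodp (T : finType) (r : rel T) (S : {set T}) := exists A B : {set T},
  [/\ A :|: B = S, [disjoint A & B], A != set0, B != set0 & anti r A B \/ comp2 r A B].

Lemma disj_neq (T : finType) (A B : {set T}) a b : [disjoint A & B] -> a \in A -> b \in B -> a != b.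
Proof.
move=> dAB aA bB; apply/eqP => Eab.
have : a \in A :&: B by rewrite inE aA Eab bB.
by rewrite (disjoint_setI0 dAB) inE.
Qed.

Section P4sec.
Variable T : finType.
Variable r : rel T.
Hypothesis symr : symmetric r.
Hypothesis irrr : irreflexive r.

Lemma mk4 a b c d : r a b -> r b c -> r c d -> ~~ r a c -> ~~ r a d -> ~~ r b d ->
  has_induced P4_rel r.
Proof.
move=> hab hbc hcd nac nad nbd.
have neq x y : r x y -> x != y by move=> h; apply: contraTneq h => ->; rewrite irrr.
have ab := neq _ _ hab; have bc := neq _ _ hbc; have cd := neq _ _ hcd.
have ac : a != c by apply: contraNneq nad => ->.
have ad : a != d by apply: contraNneq nac => ->; rewrite symr.
have bd : b != d by apply: contraNneq nad => <-.
have U : uniq [:: a; b; c; d].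
  by rewrite /= !inE !negb_or ab ac ad bc bd cd.
have hba : r b a by rewrite symr.
have hcb : r c b by rewrite symr.
have hdc : r d c by rewrite symr.
have nca : ~~ r c a by rewrite symr.
have nda : ~~ r d a by rewrite symr.
have ndb : ~~ r d b by rewrite symr.
exists (fun i : 'I_4 => nth a [:: a; b; c; d] i); split.
  move=> i j /eqP; rewrite nth_uniq // => /eqP; exact: val_inj.
move=> [[|[|[|[|i]]]] Hi] // [[|[|[|[|j]]]] Hj] //=;
  rewrite /P4_rel /edges_rel /= ?irrr ?hab ?hbc ?hcd ?hba ?hcb ?hdc
    ?(negbTE nac) ?(negbTE nad) ?(negbTE nbd) ?(negbTE nca) ?(negbTE nda) ?(negbTE ndb) //.
Qed.

Hypothesis noP4 : ~ has_induced P4_rel r.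

Lemma step (S : {set T}) v (A' B' : {set T}) : v \in S -> A' :|: B' = S :\ v -> [disjoint A' & B'] ->
  A' != set0 -> B' != set0 -> anti r A' B' -> goodp r S.
Proof.
move=> vS UA dA An Bn aA.
have [S' eS'] : {S' : {set T} | S' = S :\ v} by exists (S :\ v).
rewrite -eS' in UA.
have vS' : v \notin S' by rewrite eS' !inE eqxx.
have S'S : S' \subset S by apply/subsetP => y; rewrite eS' !inE => /andP [].
case: (boolP [forall y in S', r v y]) => [/forall_inP allv | /forall_inPn [x xS' nvx]].
  exists [set v], S'; split.
  - rewrite eS'; exact: setD1K.
  - by rewrite disjoints1.
  - by apply/set0Pn; exists v; rewrite inE.
  - by case/set0Pn: An => a aA'; apply/set0Pn; exists a; rewrite -UA inE aA'.
  - by right => a b; rewrite inE => /eqP -> bS'; exact: allv.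
pose P := fun C : {set T} => [&& x \in C, C \subset S' & [forall a in C, forall b in S' :\: C, ~~ r a b]].
have PS' : P S'.
  rewrite /P xS' subxx; apply/forall_inP => a _; apply/forall_inP => b; by rewrite setDv inE.
case: (arg_minnP (fun C : {set T} => #|C|) PS') => C PC Cmin.
move/and3P: PC => [xC CS' /forall_inP antiC].
have antiC' : forall a b, a \in C -> b \in S' -> b \notin C -> ~~ r a b.
  by move=> a b aC bS bC; have /forall_inP := antiC a aC; apply; rewrite inE bC bS.
have CS : C \subset S by apply: subset_trans S'S.
have cand : forall X Y : {set T}, X :|: Y = S' -> [disjoint X & Y] -> Y != set0 -> x \in X ->
    anti r X Y -> #|C| < #|S'|.
  move=> X Y UXY dXY Yn xX aXY.
  have XS : X \subset S' by rewrite -UXY subsetUl.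
  have PX : P X.
    rewrite /P xX XS /=; apply/forall_inP => a aX; apply/forall_inP => b.
    rewrite inE => /andP [bX]; rewrite -UXY inE => /orP [] bin; first by rewrite bin in bX.
    exact: aXY.
  apply: leq_ltn_trans (Cmin X PX) _; apply: proper_card; apply/properP; split.
    exact: XS.
  case/set0Pn: Yn => y yY; exists y; first by rewrite -UXY inE yY orbT.
  by apply: contraT => /negbNE yX; have := disj_neq dXY yX yY; rewrite eqxx.
have CltS : #|C| < #|S'|.
  have : x \in A' :|: B' by rewrite UA.
  rewrite inE => /orP [xA | xB]; first exact: (cand A' B').
  apply: (cand B' A').
  - by rewrite setUC.
  - by rewrite disjoint_sym.
  - exact: An.
  - exact: xB.
  - by move=> a b aB bA; rewrite symr; apply: aA.
case: (pickP [pred y | (y \in C) && r v y]) => [y0 /andP [y0C vy0] | Hn]; last first.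
  exists C, (S :\: C); split.
  - apply/setP => y; rewrite !inE; case yC: (y \in C) => //=.
    by rewrite (subsetP CS).
  - rewrite -setI_eq0; apply/eqP/setP => y; rewrite !inE.
    by case: (y \in C).
  - by apply/set0Pn; exists x.
  - apply/set0Pn; exists v; rewrite inE vS andbT.
    by apply: contra vS' => vC; apply: (subsetP CS').
  - left => a b aC; rewrite inE => /andP [bnC bS].
    case: (eqVneq b v) => [->|bv]; first by rewrite symr; have := Hn a; rewrite /= aC /= => ->.
    by apply: antiC' => //; rewrite eS' !inE bv bS.
case: (pickP [pred z | (z \in S' :\: C) && r v z]) => [z /andP [zSC vz] | Hz]; last first.
  have [w wS' wC] : exists2 w, w \in S' & w \notin C.
    apply/subsetPn; apply/negP => sub; have := subset_leq_card sub; rewrite leqNgt CltS.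
    by [].
  exists (S' :\: C), (v |: C); split.
  - apply/setP => y; rewrite eS' !inE; case: (eqVneq y v) => [->|yv] /=; first by rewrite vS orbT.
    case yC: (y \in C) => /=; last by rewrite ?andbT ?orbF.
    by rewrite (subsetP CS) ?orbT.
  - rewrite -setI_eq0; apply/eqP/setP => y; rewrite eS' !inE.
    case: (eqVneq y v) => [->|yv] /=; first by rewrite andbF.
    by case: (y \in C); rewrite ?andbF.
  - by apply/set0Pn; exists w; rewrite inE wC.
  - by apply/set0Pn; exists v; rewrite !inE eqxx.
  - left => a b aSC; rewrite !inE => /orP [/eqP -> | bC].
      by rewrite symr; have := Hz a; rewrite /= aSC /= => ->.
    move: aSC; rewrite inE => /andP [aC aS'].
    by rewrite symr; apply: antiC'.
pose D := [set c in C | ~~ r v c].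
have xD : x \in D by rewrite inE xC nvx.
have DS' : D \subset S' by apply/subsetP => y; rewrite inE => /andP [yC _]; apply: (subsetP CS').
have : ~~ P D.
  apply/negP => PD; have := Cmin D PD; rewrite leqNgt => /negP; apply.
  apply: proper_card; apply/properP; split.
    by apply/subsetP => y; rewrite inE => /andP [].
  by exists y0 => //; rewrite inE y0C vy0.
rewrite /P xD DS' /= => /forall_inPn [a aD /forall_inPn [b bSD]] /negbNE rab.
move: aD; rewrite inE => /andP [aC nva].
move: bSD; rewrite !inE => /andP [bnD bS'].
have bC : b \in C.
  by apply: contraT => bC; have := antiC' a b aC bS' bC; rewrite rab.
have vb : r v b by move: bnD; rewrite bC /= => /negbNE.
move: zSC; rewrite inE => /andP [zC zS'].
exfalso; apply: noP4; apply: (@mk4 a b v z) => //.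
- by rewrite symr.
- by rewrite symr.
- exact: antiC'.
- exact: antiC'.
Qed.
End P4sec.

Section P4main.
Variable T : finType.
Variable e : rel T.
Hypothesis sym : symmetric e.
Hypothesis irr : irreflexive e.

Lemma compl_sym : symmetric (compl_rel e).
Proof. by move=> x y; rewrite /compl_rel eq_sym sym. Qed.
Lemma compl_irr : irreflexive (compl_rel e).
Proof. by move=> x; rewrite /compl_rel eqxx. Qed.

Lemma noP4_compl : ~ has_induced P4_rel e -> ~ has_induced P4_rel (compl_rel e).
Proof.
move=> noP4 [f [finj fH]]; apply: noP4.
have E (i j : 'I_4) : i != j -> e (f i) (f j) = ~~ P4_rel i j.
  move=> ij; have := fH i j; rewrite /compl_rel.
  have -> : f i != f j by apply: contra ij => /eqP /finj ->.
  by move=> <-; rewrite negbK.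
pose o0 := @Ordinal 4 0 isT. pose o1 := @Ordinal 4 1 isT.
pose o2 := @Ordinal 4 2 isT. pose o3 := @Ordinal 4 3 isT.
by apply: (@mk4 _ _ sym irr (f o2) (f o0) (f o3) (f o1)); rewrite E.
Qed.

Lemma goodp_compl S : goodp (compl_rel e) S -> goodp e S.
Proof.
move=> [A [B [U d An Bn h]]]; exists A, B; split => //.
case: h => h; [right|left] => a b aA bB; have := h a b aA bB;
  rewrite /compl_rel (disj_neq d aA bB) //=.
by rewrite negbK.
Qed.

Hypothesis noP4 : ~ has_induced P4_rel e.

Lemma part n (S : {set T}) : #|S| = n.+2 -> goodp e S.
Proof.
elim: n S => [|n IH] S hS.
  have /cards2P [a [b [ab ->]]] : #|S| == 2 by rewrite hS.
  exists [set a], [set b]; split => //.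
  - by rewrite disjoints1 inE.
  - by apply/set0Pn; exists a; rewrite inE.
  - by apply/set0Pn; exists b; rewrite inE.
  - case: (boolP (e a b)) => h; [right|left] => x y; rewrite !inE => /eqP -> /eqP -> //.
have : S != set0 by rewrite -card_gt0 hS.
case/set0Pn => v vS.
have hS' : #|S :\ v| = n.+2 by move: hS; rewrite (cardsD1 v) vS add1n => -[].
have [A [B [U d An Bn [h|h]]]] := IH _ hS'.
  exact: (step sym irr noP4 vS U d An Bn h).
apply: goodp_compl.
apply: (step compl_sym compl_irr (noP4_compl noP4) vS U d An Bn).
by move=> a b aA bB; rewrite /compl_rel (disj_neq d aA bB) h.
Qed.
End P4main.

Lemma prime_has_P4 (T : finType) (e : rel T) : symmetric e -> irreflexive e -> 3 <= #|T| ->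
  prime_graph e -> has_induced P4_rel e.
Proof.
move=> sym irr hT P.
case: (classic (has_induced P4_rel e)) => // noP4; exfalso.
have [A [B [U d An Bn h]]] : goodp e [set: T].
  by apply: (part sym irr noP4 (n := #|T| - 2)); rewrite cardsT; lia.
have small : forall X Y : {set T}, X :|: Y = setT -> [disjoint X & Y] -> Y != set0 ->
    anti e X Y \/ comp2 e X Y -> #|X| <= 1.
  move=> X Y UXY dXY Yn hXY.
  have Xmod : is_module e X.
    move=> v vX; have : v \in X :|: Y by rewrite UXY inE.
    rewrite inE (negbTE vX) /= => vY.
    case: hXY => hXY; [right|left] => z zX; first by rewrite sym; apply: hXY.
    by rewrite sym; apply: hXY.
  case: (P X Xmod) => // XT; exfalso.
  case/set0Pn: Yn => y yY; have yX : y \in X by rewrite XT inE.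
  by have := disj_neq dXY yX yY; rewrite eqxx.
have hA := small A B U d Bn h.
have hB : #|B| <= 1.
  apply: (small B A); [by rewrite setUC | by rewrite disjoint_sym | by [] |].
  case: h => h; [left|right] => a b aB bA; rewrite sym; exact: h.
have := cardsUI A B; rewrite U (disjoint_setI0 d) cards0 addn0 cardsT; lia.
Qed.

Theorem theorem1 (T : finType) (e : rel T) :
  simple_graph e -> 3 <= #|T| -> prime_graph e -> DH_coDH e ->
  isomorphic_to P4_rel e \/ isomorphic_to bull_rel e.
Proof.
move=> [sym irr] hT P D.
case: (classic (has_induced bull_rel e)) => [[b [binj bH]] | nob].
  have hvH : forall i j : 'I_5, e (b i) (b j) = edn bullL i j by move=> i j; rewrite bH; exact: ednE.
  right; exact: (@main_case _ e sym irr 4 b (edn bullL) hvH binj bull_rel false (@ednE 5 bullL) fA5 fB5 isT (fun F => match F with end) P D).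
have [f [finj fH]] := prime_has_P4 sym irr hT P.
have hvH : forall i j : 'I_4, e (f i) (f j) = edn P4L i j by move=> i j; rewrite fH; exact: ednE.
left; exact: (@main_case _ e sym irr 3 f (edn P4L) hvH finj P4_rel true (@ednE 4 P4L) fA4 fB4 isT (fun _ => nob) P D).
Qed.
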